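(* Let $f\colon Y\to X$ be a generic map between path connected spaces, let $\dagger\in Y$ and write $*=f(\dagger)$. Then $f_*\colon\pi_1(Y,\dagger)\to\pi_1(X,* )$ is a split epimorphism. Consequently, the biset $B=B(f,\dagger,* )$ of $f$ is right-principal and left-invertible, namely $B^\vee\otimes_{\pi_1(Y,\dagger)}B\cong\pi_1(X,* )$ as $\pi_1(X,* )$-$\pi_1(X,* )$-bisets (the latter with actions by left and right multiplication).
   Context: A continuous map $f\colon Y\to X$ is generic if there exists a continuous map $g\colon X\to Y$ such that $f\circ g$ is isotopic to the identity of $X$. The biset $B(f,\dagger,* )$ is the set of homotopy classes rel endpoints of paths in $X$ from $f(\dagger)$ to $*$, a $\pi_1(Y,\dagger)$-$\pi_1(X,* )$-biset via $[\lambda]\cdot[\gamma]=[f\circ\lambda\#\gamma]$ and $[\gamma]\cdot[\mu]=[\gamma\#\mu]$. A biset is right-principal if the right action is simply transitive. The contragredient $B^\vee$ of an $H$-$G$-biset is the $G$-$H$-biset with the same set and actions $g\cdot\check b\cdot h=(h^{-1}bg^{-1})\check{}$; $\otimes_H$ denotes the product $B\times C/(bh,c)=(b,hc)$. *)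

(* Defs.v *)
From HB Require Import structures.
From mathcomp Require Import all_boot all_order all_algebra.
From mathcomp Require Import all_classical all_reals topology.
From mathcomp Require Import Rstruct Rstruct_topology.
Set Implicit Arguments. Unset Strict Implicit. Unset Printing Implicit Defensive.
Import Order.TTheory GRing.Theory Num.Theory.
Local Open Scope classical_set_scope.
Local Open Scope ring_scope.

Local Notation R := Rdefinitions.R.

Definition uI : set R := `[0, 1]%classic.

Definition is_path {X : topologicalType} (g : R -> X) (a b : X) : Prop :=
  {within uI, continuous g} /\ g 0 = a /\ g 1 = b.

Definition path_htpy {X : topologicalType} (g h : R -> X) : Prop :=
  exists H : R * R -> X,
    {within uI `*` uI, continuous H} /\
    (forall s, uI s -> H (s, 0) = g s /\ H (s, 1) = h s) /\
    (forall t, uI t -> H (0, t) = g 0 /\ H (1, t) = g 1).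

Definition hclass {X : topologicalType} (g : R -> X) : set (R -> X) :=
  [set h | path_htpy g h].

Definition pconcat {X : topologicalType} (g k : R -> X) : R -> X :=
  fun s => if s <= 2^-1 then g (2 * s) else k (2 * s - 1).
Definition prev {X : topologicalType} (g : R -> X) : R -> X :=
  fun s => g (1 - s).

Definition pclasses (X : topologicalType) (a b : X) : set (set (R -> X)) :=
  [set A | exists g, is_path g a b /\ A = hclass g].

Definition pi1 {X : topologicalType} (x : X) := pclasses x x.

Definition hmul {X : topologicalType} (A B : set (R -> X)) : set (R -> X) :=
  [set h | exists g k, A g /\ B k /\ path_htpy (pconcat g k) h].
Definition hinv {X : topologicalType} (A : set (R -> X)) : set (R -> X) :=
  [set h | exists g, A g /\ path_htpy (prev g) h].
Definition hpush {Y X : topologicalType} (f : Y -> X) (A : set (R -> Y))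
  : set (R -> X) := [set h | exists g, A g /\ path_htpy (f \o g) h].

Definition path_connected (X : topologicalType) : Prop :=
  forall a b : X, exists g : R -> X, is_path g a b.

Definition homeomorphism {X : topologicalType} (h : X -> X) : Prop :=
  exists k : X -> X, continuous h /\ continuous k /\ cancel h k /\ cancel k h.

Definition isotopic {X : topologicalType} (u v : X -> X) : Prop :=
  exists H : X * R -> X,
    {within [set: X] `*` uI, continuous H} /\
    (forall x, H (x, 0) = u x /\ H (x, 1) = v x) /\
    (forall t, uI t -> homeomorphism (fun x => H (x, t))).

Definition generic_map {Y X : topologicalType} (f : Y -> X) : Prop :=
  continuous f /\
  exists g : X -> Y, continuous g /\ isotopic (f \o g) idfun.

Definition split_epi_pi1 {Y X : topologicalType} (f : Y -> X) (y : Y) : Prop :=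
  exists s : set (R -> X) -> set (R -> Y),
    (forall A, pi1 (f y) A -> pi1 y (s A)) /\
    (forall A B, pi1 (f y) A -> pi1 (f y) B -> s (hmul A B) = hmul (s A) (s B)) /\
    (forall A, pi1 (f y) A -> hpush f (s A) = A).

(* carrier: pclasses X (f dag) star;
   left  pi1(Y,dag)-action: [lam].[gam] = [f o lam # gam];
   right pi1(X,star)-action: [gam].[mu] = [gam # mu] *)
Section Biset.
Context {Y X : topologicalType} (f : Y -> X) (dag : Y) (star : X).

Definition Bset := pclasses (f dag) star.
Definition Bl (L : set (R -> Y)) (G : set (R -> X)) := hmul (hpush f L) G.
Definition Br (G M : set (R -> X)) := hmul G M.

Definition right_principal : Prop :=
  (exists b, Bset b) /\
  forall b b', Bset b -> Bset b' ->
    exists! m, pi1 star m /\ Br b m = b'.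

(* B^v (x)_{pi1(Y,dag)} B: pairs (b^v, c) with b, c in B, modulo the
   equivalence relation generated by (b^v . h, c) ~ (b^v, h . c), where
   b^v . h = (h^-1 . b)^v *)
Definition tens_gen (x y : set (R -> X) * set (R -> X)) : Prop :=
  exists b c h, Bset b /\ Bset c /\ pi1 dag h /\
    x = (Bl (hinv h) b, c) /\ y = (b, Bl h c).

Definition tens_rel (x y : set (R -> X) * set (R -> X)) : Prop :=
  forall E : set (R -> X) * set (R -> X) -> set (R -> X) * set (R -> X) -> Prop,
    (forall z, E z z) -> (forall z w, E z w -> E w z) ->
    (forall z w u, E z w -> E w u -> E z u) ->
    (forall z w, tens_gen z w -> E z w) -> E x y.

Definition tens : set (set (set (R -> X) * set (R -> X))) :=
  [set C | exists x, Bset x.1 /\ Bset x.2 /\ C = [set y | tens_rel x y]].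

(* pi1(X,star)-pi1(X,star)-biset structure on the tensor product:
   g . (b^v (x) c) . g' = (b^v . ... ) with g . b^v = (b . g^-1)^v *)
Definition tens_act (g : set (R -> X)) (C : set (set (R -> X) * set (R -> X)))
  (g' : set (R -> X)) : set (set (R -> X) * set (R -> X)) :=
  [set y | exists x, C x /\ tens_rel (Br x.1 (hinv g), Br x.2 g') y].

Definition left_invertible : Prop :=
  exists phi : set (set (R -> X) * set (R -> X)) -> set (R -> X),
    (forall C, tens C -> pi1 star (phi C)) /\
    (forall C D, tens C -> tens D -> phi C = phi D -> C = D) /\
    (forall A, pi1 star A -> exists C, tens C /\ phi C = A) /\
    (forall C g g', tens C -> pi1 star g -> pi1 star g' ->
       phi (tens_act g C g') = hmul (hmul g (phi C)) g').
End Biset.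

(* Main.v *)
Require Import Defs.
From mathcomp Require Import all_boot all_classical all_reals topology.
From HB Require Import structures.
From mathcomp Require Import all_order all_algebra normedtype.
From mathcomp Require Import Rstruct Rstruct_topology.
Require Import Defs.
From mathcomp Require Import lra.
Set Implicit Arguments. Unset Strict Implicit. Unset Printing Implicit Defensive.
Import Order.TTheory GRing.Theory Num.Theory.
Local Open Scope classical_set_scope.
Local Open Scope ring_scope.
Local Notation R := Rdefinitions.R.


Section Cont.
Context {T U V : topologicalType}.

Lemma within_comp (A : set T) (B : set U) (f : T -> U) (g : U -> V) :
  {within A, continuous f} -> (forall x, A x -> B (f x)) ->
  {within B, continuous g} -> {within A, continuous (g \o f)}.
Proof.
move=> cf AB cg; apply/subspace_continuousP => x Ax.
move/subspace_continuousP: cf => /(_ x Ax) cfx.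
move/subspace_continuousP: cg => /(_ (f x) (AB x Ax)) cgx.
move=> W /cgx; rewrite /= nbhs_simpl /within /= => PW.
have h := cfx _ PW.
have h2 : \forall z \near x, A z -> B (f z) -> W (g (f z)) by exact: h.
suff : \forall z \near x, A z -> W (g (f z)) by [].
apply: filterS h2 => z H Az; exact: (H Az (AB z Az)).
Qed.

Lemma within_cst (A : set T) (c : U) : {within A, continuous (fun _ : T => c)}.
Proof. apply: continuous_subspaceT; exact: cst_continuous. Qed.

Lemma within_pair (A : set T) (a : T -> U) (b : T -> V) :
  {within A, continuous a} -> {within A, continuous b} ->
  {within A, continuous (fun x => (a x, b x))}.
Proof.
move=> ca cb x; apply: cvg_pair; [exact: ca | exact: cb].
Qed.

End Cont.

Lemma fst_cont {T U : topologicalType} : continuous (@fst T U).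
Proof. by move=> x; apply: cvg_fst. Qed.
Lemma snd_cont {T U : topologicalType} : continuous (@snd T U).
Proof. by move=> x; apply: cvg_snd. Qed.

Section Arith.
Context {T : topologicalType}.
Implicit Types (A : set T) (a b : T -> R).

Lemma within_add A a b : {within A, continuous a} -> {within A, continuous b} ->
  {within A, continuous (fun x => a x + b x)}.
Proof. move=> ca cb x; exact: (@continuousD _ R^o (subspace A) a b x (ca x) (cb x)). Qed.

Lemma within_mul A a b : {within A, continuous a} -> {within A, continuous b} ->
  {within A, continuous (fun x => a x * b x)}.
Proof. move=> ca cb x; exact: (@continuousM _ (subspace A) a b x (ca x) (cb x)). Qed.

Lemma within_opp A a : {within A, continuous a} ->
  {within A, continuous (fun x => - a x)}.
Proof.
move=> ca; have -> : (fun x => - a x) = (fun x => (-1) * a x).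
  by apply: funext => x; rewrite mulN1r.
by apply: within_mul => //; exact: within_cst.
Qed.

Lemma within_sub A a b : {within A, continuous a} -> {within A, continuous b} ->
  {within A, continuous (fun x => a x - b x)}.
Proof. by move=> ca cb; apply: within_add => //; exact: within_opp. Qed.

End Arith.

Lemma within_id {T : topologicalType} (A : set T) : {within A, continuous (fun x : T => x)}.
Proof. apply: continuous_subspaceT => x; exact: cvg_id. Qed.

Lemma within_fst {T U : topologicalType} (A : set (T * U)) : {within A, continuous fst}.
Proof. exact: continuous_subspaceT fst_cont. Qed.
Lemma within_snd {T U : topologicalType} (A : set (T * U)) : {within A, continuous snd}.
Proof. exact: continuous_subspaceT snd_cont. Qed.

Lemma within_eq {T U : topologicalType} (A : set T) (f g : T -> U) :
  (forall x, A x -> f x = g x) -> {within A, continuous f} -> {within A, continuous g}.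
Proof.
move=> e; apply: subspace_eq_continuous => x; rewrite inE => Ax; exact: e.
Qed.

Lemma paste {T U : topologicalType} (A : set T) (phi : T -> R) (c : R) (f : T -> U) :
  closed A -> continuous phi ->
  {within A `&` [set x | phi x <= c], continuous f} ->
  {within A `&` [set x | c <= phi x], continuous f} -> {within A, continuous f}.
Proof.
move=> cA cphi c1 c2.
have -> : A = (A `&` [set x | phi x <= c]) `|` (A `&` [set x | c <= phi x]).
  apply/seteqP; split => x /=.
    by move=> Ax; case: (lerP (phi x) c) => h; [left|right; rewrite ltW].
  by case=> -[].
apply: withinU_continuous => //; apply: closedI => //.
  by have := proj1 (continuous_closedP phi) cphi _ (@closed_le R c).
by have := proj1 (continuous_closedP phi) cphi _ (@closed_ge R c).
Qed.
Arguments within_fst {T U} A.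
Arguments within_snd {T U} A.
Arguments within_id {T} A.
Arguments within_cst {T U} A c.


Lemma uIP (s : R) : uI s <-> 0 <= s <= 1.
Proof. by rewrite /uI /= in_itv. Qed.

Lemma uI0 : uI 0. Proof. by apply/uIP; lra. Qed.
Lemma uI1 : uI 1. Proof. by apply/uIP; lra. Qed.

Lemma closed_uI : closed uI.
Proof.
have -> : uI = [set x : R | 0 <= x] `&` [set x | x <= 1].
  by apply/seteqP; split => x; rewrite /uI /= in_itv /= => /andP.
by apply: closedI; [exact: closed_ge | exact: closed_le].
Qed.

Lemma closed_uI2 : closed (uI `*` uI).
Proof.
have -> : uI `*` uI = (fst @^-1` uI) `&` (snd @^-1` uI) :> set (R * R) by [].
apply: closedI.
  exact: (proj1 (continuous_closedP _) fst_cont _ closed_uI).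
exact: (proj1 (continuous_closedP _) snd_cont _ closed_uI).
Qed.

Lemma within_max {T : topologicalType} (A : set T) (a b : T -> R) :
  {within A, continuous a} -> {within A, continuous b} ->
  {within A, continuous (fun x => Num.max (a x) (b x))}.
Proof. move=> ca cb; move=> x; exact: (@continuous_max R (subspace A) a b x (ca x) (cb x)). Qed.

Lemma within_min {T : topologicalType} (A : set T) (a b : T -> R) :
  {within A, continuous a} -> {within A, continuous b} ->
  {within A, continuous (fun x => Num.min (a x) (b x))}.
Proof. move=> ca cb; move=> x; exact: (@continuous_min R (subspace A) a b x (ca x) (cb x)). Qed.

Section Paths.
Context {X : topologicalType}.
Implicit Types (g h k l : R -> X).

Lemma pconcat_cont g k : {within uI, continuous g} -> {within uI, continuous k} ->
  g 1 = k 0 -> {within uI, continuous (pconcat g k)}.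
Proof.
move=> cg ck e; apply: (@paste _ _ uI (fun s => s) (2^-1)) => //.
- exact: closed_uI.
- by move=> x; exact: cvg_id.
- apply: (@within_eq _ _ _ (g \o (fun s => 2 * s))).
    by move=> s [_ /= hs]; rewrite /pconcat /= hs.
  apply: (within_comp _ _ cg).
    by apply: within_mul; [exact: within_cst | exact: within_id].
  by move=> s [/uIP hs /= hs2]; apply/uIP; lra.
- apply: (@within_eq _ _ _ (k \o (fun s => 2 * s - 1))).
    move=> s [_ /= hs]; rewrite /pconcat /=; case: ifP => // h.
    have -> : s = 2^-1 by lra.
    have -> : (2 * 2^-1 : R) = 1 by lra.
    have -> : (1 - 1 : R) = 0 by lra.
    exact: esym e.
  apply: (within_comp _ _ ck).
    by apply: within_sub; [apply: within_mul; [exact: within_cst | exact: within_id]|exact: within_cst].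
  by move=> s [/uIP hs /= hs2]; apply/uIP; lra.
Qed.


Lemma uI2P (p : R * R) : (uI `*` uI) p <-> 0 <= p.1 <= 1 /\ 0 <= p.2 <= 1.
Proof. by case: p => a b; split => -[/uIP ? /uIP ?]. Qed.

Lemma within_in2 {T : topologicalType} (A : set T) (a b : T -> R) :
  {within A, continuous a} -> {within A, continuous b} ->
  {within A, continuous (fun x => (a x, b x))}.
Proof. exact: within_pair. Qed.

Lemma htpy_cont_l g h : path_htpy g h -> {within uI, continuous g}.
Proof.
move=> [H [cH [Hs Ht]]].
apply: (@within_eq _ _ _ (H \o (fun s => (s, 0)))).
  by move=> s us /=; case: (Hs s us).
apply: (within_comp _ _ cH); first by apply: within_pair; [exact: within_id|exact: within_cst].
by move=> s us; split => //; exact: uI0.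
Qed.

Lemma htpy_cont_r g h : path_htpy g h -> {within uI, continuous h}.
Proof.
move=> [H [cH [Hs Ht]]].
apply: (@within_eq _ _ _ (H \o (fun s => (s, 1)))).
  by move=> s us /=; case: (Hs s us).
apply: (within_comp _ _ cH); first by apply: within_pair; [exact: within_id|exact: within_cst].
by move=> s us; split => //; exact: uI1.
Qed.

Lemma htpy_end g h : path_htpy g h -> h 0 = g 0 /\ h 1 = g 1.
Proof.
move=> [H [cH [Hs Ht]]].
have [_ <-] := Hs 0 uI0; have [_ <-] := Hs 1 uI1.
by case: (Ht 1 uI1) => -> ->.
Qed.

Lemma htpy_refl g : {within uI, continuous g} -> path_htpy g g.
Proof.
move=> cg; exists (fun p => g p.1); split.
  apply: (@within_comp _ _ _ (uI `*` uI) uI fst g (within_fst _) _ cg) => p [] //.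
by split.
Qed.

Lemma htpy_sym g h : path_htpy g h -> path_htpy h g.
Proof.
move=> gh; have [e0 e1] := htpy_end gh; move: gh => [H [cH [Hs Ht]]].
exists (fun p => H (p.1, 1 - p.2)); split.
  apply: (within_comp _ _ cH).
    by apply: within_pair; [exact: within_fst| apply: within_sub; [exact: within_cst|exact: within_snd]].
  by move=> [a b] [/= /uIP/andP[? ?] /uIP/andP[? ?]]; split; apply/uIP; apply/andP; split => /=; lra.
split.
  move=> s us; rewrite /= subr0 subrr.
  by case: (Hs s us).
move=> t /uIP ut; rewrite /= e0 e1; apply: Ht; apply/uIP; lra.
Qed.

Lemma htpy_eq_l g g' h : (forall s, uI s -> g s = g' s) -> path_htpy g h -> path_htpy g' h.
Proof.
move=> e [H [cH [Hs Ht]]]; exists H; split => //; split.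
  by move=> s us; rewrite -e //; exact: Hs.
by move=> t ut; rewrite -!e //; [exact: Ht|exact: uI1|exact: uI0].
Qed.

Lemma htpy_eq_r g h h' : (forall s, uI s -> h s = h' s) -> path_htpy g h -> path_htpy g h'.
Proof.
move=> e [H [cH [Hs Ht]]]; exists H; split => //; split => //.
by move=> s us; rewrite -e //; exact: Hs.
Qed.

Lemma htpy_trans g h k : path_htpy g h -> path_htpy h k -> path_htpy g k.
Proof.
move=> gh hk; have [e0 e1] := htpy_end gh.
move: gh hk => [H1 [c1 [Hs1 Ht1]]] [H2 [c2 [Hs2 Ht2]]].
exists (fun p => if p.2 <= 2^-1 then H1 (p.1, 2 * p.2) else H2 (p.1, 2 * p.2 - 1)).
split.
  apply: (@paste _ _ _ snd (2^-1)); [exact: closed_uI2|exact: snd_cont| |].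
    apply: (@within_eq _ _ _ (H1 \o (fun p => (p.1, 2 * p.2)))).
      by move=> [a b] [_ /= ->].
    apply: (within_comp _ _ c1).
      apply: within_pair; first exact: within_fst.
      by apply: within_mul; [exact: within_cst|exact: within_snd].
    by move=> [a b] [[/= /uIP/andP[? ?] /uIP/andP[? ?]] /= ?]; split; apply/uIP; apply/andP; split; lra.
  apply: (@within_eq _ _ _ (H2 \o (fun p => (p.1, 2 * p.2 - 1)))).
    move=> [a b] [[/= /uIP/andP[? ?] /uIP/andP[? ?]] /= hb]; case: ifP => // hb'.
    have -> : b = 2^-1 by lra.
    have -> : (2 * 2^-1 : R) = 1 by lra.
    have -> : (1 - 1 : R) = 0 by lra.
    have ua : uI a by apply/uIP/andP.
    by case: (Hs1 a ua) => _ ->; case: (Hs2 a ua).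
  apply: (within_comp _ _ c2).
    apply: within_pair; first exact: within_fst.
    apply: within_sub; last exact: within_cst.
    by apply: within_mul; [exact: within_cst|exact: within_snd].
  by move=> [a b] [[/= /uIP/andP[? ?] /uIP/andP[? ?]] /= ?]; split; apply/uIP; apply/andP; split; lra.
split.
  move=> s us /=; split.
    have -> : (0 : R) <= 2^-1 by lra.
    by rewrite mulr0; case: (Hs1 s us).
  have -> : ((1 : R) <= 2^-1) = false by apply/negbTE; rewrite -ltNge; lra.
  have -> : (2 * 1 - 1 : R) = 1 by lra.
  by case: (Hs2 s us).
move=> t /uIP/andP[? ?] /=; case: ifP => ht.
  by apply: Ht1; apply/uIP/andP; split; lra.
have ht' : 2^-1 < t by rewrite ltNge ht.
rewrite -e0 -e1; by apply: Ht2; apply/uIP/andP; split; lra.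
Qed.

Lemma conv_htpy (F : R * R -> X) (p q : R -> R * R) :
  {within uI `*` uI, continuous F} -> {within uI, continuous p} ->
  {within uI, continuous q} ->
  (forall s, uI s -> (uI `*` uI) (p s)) -> (forall s, uI s -> (uI `*` uI) (q s)) ->
  p 0 = q 0 -> p 1 = q 1 -> path_htpy (F \o p) (F \o q).
Proof.
move=> cF cp cq pI qI e0 e1.
pose c1 := fun a b t : R => (1 - t) * a + t * b.
exists (fun z => F (c1 (p z.1).1 (q z.1).1 z.2, c1 (p z.1).2 (q z.1).2 z.2)).
have cp1 : {within uI `*` uI, continuous (fun z : R * R => (p z.1).1)}.
  apply: (within_comp _ _ (within_fst (uI `*` uI))).
  apply: (within_comp (within_fst _) _ cp); by move=> [a b] [].
  by move=> z [/pI ? _].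
have cp2 : {within uI `*` uI, continuous (fun z : R * R => (p z.1).2)}.
  apply: (within_comp _ _ (within_snd (uI `*` uI))).
  apply: (within_comp (within_fst _) _ cp); by move=> [a b] [].
  by move=> z [/pI ? _].
have cq1 : {within uI `*` uI, continuous (fun z : R * R => (q z.1).1)}.
  apply: (within_comp _ _ (within_fst (uI `*` uI))).
  apply: (within_comp (within_fst _) _ cq); by move=> [a b] [].
  by move=> z [/qI ? _].
have cq2 : {within uI `*` uI, continuous (fun z : R * R => (q z.1).2)}.
  apply: (within_comp _ _ (within_snd (uI `*` uI))).
  apply: (within_comp (within_fst _) _ cq); by move=> [a b] [].
  by move=> z [/qI ? _].
have cc : forall a b : R * R -> R, {within uI `*` uI, continuous a} ->
    {within uI `*` uI, continuous b} ->
    {within uI `*` uI, continuous (fun z => c1 (a z) (b z) z.2)}.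
  move=> a b ca cb; rewrite /c1; apply: within_add; apply: within_mul => //.
  - by apply: within_sub; [exact: within_cst|exact: within_snd].
  - exact: within_snd.
split.
  apply: (within_comp _ _ cF); first by apply: within_pair; apply: cc.
  move=> [s t] [/= us /uIP/andP [? ?]].
  have := pI s us; have := qI s us; case: (p s) => [p1 p2]; case: (q s) => [q1 q2].
  move=> [/= /uIP/andP[? ?] /uIP/andP[? ?]] [/= /uIP/andP[? ?] /uIP/andP[? ?]].
  by rewrite /c1 /=; split; apply/uIP; apply/andP; split; nra.
split.
  have h0 : forall a b : R, c1 a b 0 = a by move=> a b; rewrite /c1; lra.
  have h1 : forall a b : R, c1 a b 1 = b by move=> a b; rewrite /c1; lra.
  move=> s us /=; rewrite !h0 !h1.
  by split; [case: (p s)|case: (q s)].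
move=> t ut /=; rewrite -e0 -e1.
have h : forall a : R, c1 a a t = a by move=> a; rewrite /c1; lra.
by rewrite !h; split; [case: (p 0)|case: (p 1)].
Qed.

End Paths.


Lemma nle_gt (a b : R) : (a <= b) = false -> b < a.
Proof. by move/negbT; rewrite -ltNge. Qed.
Ltac cif := let h := fresh "h" in
  case: ifP => h; [|move/nle_gt: h => h].
Ltac split_ifs := repeat cif.
Ltac clean := repeat match goal with H : ?T |- _ =>
  lazymatch T with is_true _ => fail | R => fail | _ => clear H end end.
Ltac rlra := lazymatch goal with
  | |- @eq ?T _ _ => unify T R; clean; lra
  | |- False => clean; lra end.
Ltac close_pw := try (exfalso; rlra); try (f_equal; rlra).
Ltac nomax t := match t with context [Order.max _ _] => fail 1 | context [Order.min _ _] => fail 1 | _ => idtac end.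
Ltac elim_max := repeat match goal with
  | |- context [Order.max ?a ?b] => nomax a; nomax b; case: (leP a b) => ?
  | |- context [Order.min ?a ?b] => nomax a; nomax b; case: (leP a b) => ?
  end.

Section L.
Context {X : topologicalType}.
Implicit Types (g h k l : R -> X).

Lemma reparam2 g (phi psi : R -> R) : {within uI, continuous g} ->
  {within uI, continuous phi} -> {within uI, continuous psi} ->
  (forall s, uI s -> uI (phi s)) -> (forall s, uI s -> uI (psi s)) ->
  phi 0 = psi 0 -> phi 1 = psi 1 -> path_htpy (g \o phi) (g \o psi).
Proof.
move=> cg cphi cpsi phiI psiI e0 e1.
have := @conv_htpy X (g \o fst) (fun s => (phi s, 0)) (fun s => (psi s, 0)).
apply.
- apply: (@within_comp _ _ _ (uI `*` uI) uI fst g (within_fst _) _ cg).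
  by move=> p [].
- by apply: within_pair => //; exact: within_cst.
- by apply: within_pair => //; exact: within_cst.
- by move=> s us; split => //=; [exact: phiI | exact: uI0].
- by move=> s us; split => //=; [exact: psiI | exact: uI0].
- by rewrite e0.
- by rewrite e1.
Qed.

Lemma reparam g (phi : R -> R) : {within uI, continuous g} ->
  {within uI, continuous phi} -> (forall s, uI s -> uI (phi s)) ->
  phi 0 = 0 -> phi 1 = 1 -> path_htpy (g \o phi) g.
Proof.
move=> cg cphi phiI e0 e1.
have := @reparam2 g phi (fun s => s) cg cphi (within_id _) phiI (fun (s : R) (hs : uI s) => hs) e0 e1.
by apply: htpy_eq_r.
Qed.


Lemma cst_cont (x : X) : {within uI, continuous (fun _ : R => x)}.
Proof. exact: within_cst. Qed.

Lemma prev_cont g : {within uI, continuous g} -> {within uI, continuous (prev g)}.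
Proof.
move=> cg; apply: (@within_comp _ _ _ uI uI (fun s => 1 - s) g) => //.
  by apply: within_sub; [exact: within_cst|exact: within_id].
by move=> s /uIP/andP[? ?]; apply/uIP/andP; split; lra.
Qed.

Lemma push_cont {Y : topologicalType} (f : X -> Y) g : continuous f ->
  {within uI, continuous g} -> {within uI, continuous (f \o g)}.
Proof.
move=> cf cg; apply: (@within_comp _ _ _ uI setT g f cg) => //.
exact: continuous_subspaceT.
Qed.

Lemma pconcat_htpy g g' k k' : path_htpy g g' -> path_htpy k k' -> g 1 = k 0 ->
  path_htpy (pconcat g k) (pconcat g' k').
Proof.
move=> gg kk e.
have [e0 e1] := htpy_end gg; have [f0 f1] := htpy_end kk.
move: gg kk => [H1 [c1 [Hs1 Ht1]]] [H2 [c2 [Hs2 Ht2]]].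
exists (fun p => if p.1 <= 2^-1 then H1 (2 * p.1, p.2) else H2 (2 * p.1 - 1, p.2)).
split.
  apply: (@paste _ _ _ fst (2^-1)); [exact: closed_uI2|exact: fst_cont| |].
    apply: (@within_eq _ _ _ (H1 \o (fun p => (2 * p.1, p.2)))).
      by move=> [a b] [_ /= ->].
    apply: (within_comp _ _ c1).
      apply: within_pair; last exact: within_snd.
      by apply: within_mul; [exact: within_cst|exact: within_fst].
    by move=> [a b] [[/= /uIP/andP[? ?] /uIP/andP[? ?]] /= ?]; split; apply/uIP; apply/andP; split; lra.
  apply: (@within_eq _ _ _ (H2 \o (fun p => (2 * p.1 - 1, p.2)))).
    move=> [a b] [[/= /uIP/andP[? ?] /uIP/andP[? ?]] /= ha]; case: ifP => // ha'.
    have -> : a = 2^-1 by lra.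
    have -> : (2 * 2^-1 : R) = 1 by lra.
    have -> : (1 - 1 : R) = 0 by lra.
    have ub : uI b by apply/uIP/andP.
    by case: (Ht1 b ub) => _ ->; case: (Ht2 b ub) => -> _.
  apply: (within_comp _ _ c2).
    apply: within_pair; last exact: within_snd.
    apply: within_sub; last exact: within_cst.
    by apply: within_mul; [exact: within_cst|exact: within_fst].
  by move=> [a b] [[/= /uIP/andP[? ?] /uIP/andP[? ?]] /= ?]; split; apply/uIP; apply/andP; split; lra.
split.
  move=> s /uIP/andP[? ?] /=; rewrite /pconcat; case: ifP => hs.
    by apply: Hs1; apply/uIP/andP; split; lra.
  have hs' : 2^-1 < s by rewrite ltNge hs.
  by apply: Hs2; apply/uIP/andP; split; lra.
move=> t ut /=; rewrite /pconcat.
have -> : (0 : R) <= 2^-1 by lra.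
have -> : ((1 : R) <= 2^-1) = false by apply/negbTE; rewrite -ltNge; lra.
rewrite mulr0; have -> : (2 * 1 - 1 : R) = 1 by lra.
by split; [case: (Ht1 t ut) | case: (Ht2 t ut)].
Qed.

Lemma prev_htpy g g' : path_htpy g g' -> path_htpy (prev g) (prev g').
Proof.
move=> [H [cH [Hs Ht]]].
exists (fun p => H (1 - p.1, p.2)); split.
  apply: (within_comp _ _ cH).
    apply: within_pair; last exact: within_snd.
    by apply: within_sub; [exact: within_cst|exact: within_fst].
  by move=> [a b] [/= /uIP/andP[? ?] /uIP/andP[? ?]]; split; apply/uIP; apply/andP; split => /=; lra.
split.
  by move=> s /uIP/andP[? ?]; rewrite /prev /=; apply: Hs; apply/uIP/andP; split; lra.
move=> t ut; rewrite /prev /= subr0 subrr.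
by case: (Ht t ut).
Qed.

Lemma push_htpy {Y : topologicalType} (f : X -> Y) g g' : continuous f ->
  path_htpy g g' -> path_htpy (f \o g) (f \o g').
Proof.
move=> cf [H [cH [Hs Ht]]].
exists (f \o H); split.
  apply: (@within_comp _ _ _ _ setT H f cH) => //.
  exact: continuous_subspaceT.
split.
  by move=> s us /=; case: (Hs s us) => -> ->.
by move=> t ut /=; case: (Ht t ut) => -> ->.
Qed.

Lemma pconcat_assoc g k l : {within uI, continuous g} -> {within uI, continuous k} ->
  {within uI, continuous l} -> g 1 = k 0 -> k 1 = l 0 ->
  path_htpy (pconcat (pconcat g k) l) (pconcat g (pconcat k l)).
Proof.
move=> cg ck cl e1 e2.
pose phi := fun s : R => Num.max (s / 2) (Num.max (s - 4^-1) (2 * s - 1)).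
have cW : {within uI, continuous (pconcat (pconcat g k) l)}.
  apply: pconcat_cont => //; first exact: pconcat_cont.
  rewrite /pconcat; have -> : ((1 : R) <= 2^-1) = false by apply/negbTE; rewrite -ltNge; lra.
  by rewrite -e2; congr k; lra.
have := @reparam (pconcat (pconcat g k) l) phi cW.
move=> H; apply: htpy_sym; apply: htpy_eq_l (H _ _ _ _); last first.
- rewrite /phi; elim_max; lra.
- rewrite /phi; elim_max; lra.
- move=> s /uIP/andP[? ?]; rewrite /phi; apply/uIP/andP; elim_max; split; lra.
- apply: within_max.
    by apply: within_mul; [exact: within_id|exact: within_cst].
  apply: within_max.
    by apply: within_sub; [exact: within_id|exact: within_cst].
  apply: within_sub; [|exact: within_cst].
  by apply: within_mul; [exact: within_cst|exact: within_id].
move=> s /uIP/andP[? ?]; rewrite /= /phi /pconcat; elim_max.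
all: split_ifs; close_pw.
Qed.

Lemma pconcat_cst_l g (x : X) : {within uI, continuous g} -> g 0 = x ->
  path_htpy (pconcat (fun _ => x) g) g.
Proof.
move=> cg e.
have := @reparam g (fun s => Num.max 0 (2 * s - 1)) cg.
move=> H; apply: htpy_eq_l (H _ _ _ _); last first.
- elim_max; lra.
- elim_max; lra.
- move=> s /uIP/andP[? ?]; apply/uIP/andP; elim_max; split; lra.
- apply: within_max; first exact: within_cst.
  apply: within_sub; [|exact: within_cst].
  by apply: within_mul; [exact: within_cst|exact: within_id].
move=> s /uIP/andP[? ?]; rewrite /= /pconcat; elim_max.
all: split_ifs; close_pw.
all: rewrite -e //; f_equal; rlra.
Qed.

Lemma pconcat_cst_r g (x : X) : {within uI, continuous g} -> g 1 = x ->
  path_htpy (pconcat g (fun _ => x)) g.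
Proof.
move=> cg e.
have := @reparam g (fun s => Num.min 1 (2 * s)) cg.
move=> H; apply: htpy_eq_l (H _ _ _ _); last first.
- elim_max; lra.
- elim_max; lra.
- move=> s /uIP/andP[? ?]; apply/uIP/andP; elim_max; split; lra.
- apply: within_min; first exact: within_cst.
  by apply: within_mul; [exact: within_cst|exact: within_id].
move=> s /uIP/andP[? ?]; rewrite /= /pconcat; elim_max.
all: split_ifs; close_pw.
all: rewrite -e; f_equal; clean; lra.
Qed.

Lemma pconcat_prev g : {within uI, continuous g} ->
  path_htpy (pconcat g (prev g)) (fun _ => g 0).
Proof.
move=> cg.
have := @reparam2 g (fun s => Num.min (2 * s) (2 - 2 * s)) (fun _ => 0) cg.
move=> H; apply: htpy_eq_l; last apply: htpy_eq_r (H _ _ _ _ _ _); last first.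
- elim_max; lra.
- elim_max; lra.
- by move=> *; exact: uI0.
- move=> s /uIP/andP[? ?]; apply/uIP/andP; elim_max; split; lra.
- exact: within_cst.
- apply: within_min.
    by apply: within_mul; [exact: within_cst|exact: within_id].
  apply: within_sub; [exact: within_cst|].
  by apply: within_mul; [exact: within_cst|exact: within_id].
- by [].
move=> s /uIP/andP[? ?]; rewrite /= /pconcat /prev; elim_max.
all: split_ifs; close_pw.
Qed.

Lemma prev_pconcat g : {within uI, continuous g} ->
  path_htpy (pconcat (prev g) g) (fun _ => g 1).
Proof.
move=> cg.
have := @reparam2 g (fun s => Num.max (1 - 2 * s) (2 * s - 1)) (fun _ => 1) cg.
move=> H; apply: htpy_eq_l; last apply: htpy_eq_r (H _ _ _ _ _ _); last first.
- elim_max; lra.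
- elim_max; lra.
- by move=> *; exact: uI1.
- move=> s /uIP/andP[? ?]; apply/uIP/andP; elim_max; split; lra.
- exact: within_cst.
- apply: within_max.
    apply: within_sub; [exact: within_cst|].
    by apply: within_mul; [exact: within_cst|exact: within_id].
  apply: within_sub; [|exact: within_cst].
  by apply: within_mul; [exact: within_cst|exact: within_id].
- by [].
move=> s /uIP/andP[? ?]; rewrite /= /pconcat /prev; elim_max.
all: split_ifs; close_pw.
Qed.

End L.


Section C.
Context {X : topologicalType}.
Implicit Types (g k l : R -> X) (A B C : set (R -> X)).

Definition E (a : X) : set (R -> X) := hclass (fun _ => a).

Lemma hclass_eq g k : path_htpy g k -> hclass g = hclass k.
Proof.
move=> gk; apply/seteqP; split => h /=.
  by move=> gh; exact: htpy_trans (htpy_sym gk) gh.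
by move=> kh; exact: htpy_trans gk kh.
Qed.

Lemma hclass_self g : {within uI, continuous g} -> hclass g g.
Proof. by move=> cg; exact: htpy_refl. Qed.

Lemma ispath_cont g a b : is_path g a b -> {within uI, continuous g}.
Proof. by case. Qed.

Lemma pconcat_path g k a b c : is_path g a b -> is_path k b c -> is_path (pconcat g k) a c.
Proof.
move=> [cg [g0 g1]] [ck [k0 k1]]; split.
  by apply: pconcat_cont => //; rewrite g1 k0.
rewrite /pconcat; split.
  by rewrite mulr0; have -> : (0 : R) <= 2^-1 by lra.
have -> : ((1 : R) <= 2^-1) = false by apply/negbTE; rewrite -ltNge; lra.
by have -> : (2 * 1 - 1 : R) = 1 by lra.
Qed.

Lemma prev_path g a b : is_path g a b -> is_path (prev g) b a.
Proof.
move=> [cg [g0 g1]]; split; first exact: prev_cont.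
by rewrite /prev subr0 subrr.
Qed.

Lemma push_path {Y : topologicalType} (f : X -> Y) g a b : continuous f ->
  is_path g a b -> is_path (f \o g) (f a) (f b).
Proof.
move=> cf [cg [g0 g1]]; split; first exact: push_cont.
by rewrite /= g0 g1.
Qed.

Lemma cst_path (a : X) : is_path (fun _ => a) a a.
Proof. by split => //; exact: within_cst. Qed.

Lemma hmul_hclass g k a b c : is_path g a b -> is_path k b c ->
  hmul (hclass g) (hclass k) = hclass (pconcat g k).
Proof.
move=> pg pk; have [cg [g0 g1]] := pg; have [ck [k0 k1]] := pk.
apply/seteqP; split => h /=.
  move=> [g' [k' [gg [kk hh]]]].
  apply: htpy_trans hh; apply: pconcat_htpy => //.
  by rewrite g1 k0.
move=> hh; exists g, k; split; first exact: hclass_self.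
by split => //; exact: hclass_self.
Qed.

Lemma hinv_hclass g : {within uI, continuous g} -> hinv (hclass g) = hclass (prev g).
Proof.
move=> cg; apply/seteqP; split => h /=.
  move=> [g' [gg hh]]; apply: htpy_trans hh; exact: prev_htpy.
by move=> hh; exists g; split => //; exact: hclass_self.
Qed.

Lemma hpush_hclass {Y : topologicalType} (f : X -> Y) g : continuous f ->
  {within uI, continuous g} -> hpush f (hclass g) = hclass (f \o g).
Proof.
move=> cf cg; apply/seteqP; split => h /=.
  move=> [g' [gg hh]]; apply: htpy_trans hh; exact: push_htpy.
by move=> hh; exists g; split => //; exact: hclass_self.
Qed.

End C.

Section G.
Context {X : topologicalType}.
Implicit Types (g k l : R -> X) (A B C : set (R -> X)).

Lemma pc_mul a b c A B : pclasses a b A -> pclasses b c B -> pclasses a c (hmul A B).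
Proof.
move=> [g [pg ->]] [k [pk ->]]; exists (pconcat g k); split.
  exact: pconcat_path pg pk.
exact: hmul_hclass pg pk.
Qed.

Lemma pc_inv a b A : pclasses a b A -> pclasses b a (hinv A).
Proof.
move=> [g [pg ->]]; exists (prev g); split; first exact: prev_path.
by rewrite hinv_hclass //; exact: ispath_cont pg.
Qed.

Lemma pc_E (a : X) : pclasses a a (E a).
Proof. by exists (fun _ => a); split => //; exact: cst_path. Qed.

Lemma hmulA a b c d A B C : pclasses a b A -> pclasses b c B -> pclasses c d C ->
  hmul (hmul A B) C = hmul A (hmul B C).
Proof.
move=> [g [pg ->]] [k [pk ->]] [l [pl ->]].
rewrite (hmul_hclass pg pk) (hmul_hclass (pconcat_path pg pk) pl).
rewrite (hmul_hclass pk pl) (hmul_hclass pg (pconcat_path pk pl)).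
apply: hclass_eq; move: pg pk pl => [cg [g0 g1]] [ck [k0 k1]] [cl [l0 l1]].
by apply: pconcat_assoc => //; [rewrite g1 k0|rewrite k1 l0].
Qed.

Lemma hmul1l a b A : pclasses a b A -> hmul (E a) A = A.
Proof.
move=> [g [pg ->]]; rewrite /E (hmul_hclass (cst_path a) pg).
apply: hclass_eq; move: pg => [cg [g0 g1]]; exact: pconcat_cst_l.
Qed.

Lemma hmul1r a b A : pclasses a b A -> hmul A (E b) = A.
Proof.
move=> [g [pg ->]]; rewrite /E (hmul_hclass pg (cst_path b)).
apply: hclass_eq; move: pg => [cg [g0 g1]]; exact: pconcat_cst_r.
Qed.

Lemma hmulV a b A : pclasses a b A -> hmul A (hinv A) = E a.
Proof.
move=> [g [pg ->]]; have cg := ispath_cont pg.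
rewrite hinv_hclass // (hmul_hclass pg (prev_path pg)) /E.
move: pg => [_ [g0 g1]]; rewrite -g0; apply: hclass_eq; exact: pconcat_prev.
Qed.

Lemma hmulVl a b A : pclasses a b A -> hmul (hinv A) A = E b.
Proof.
move=> [g [pg ->]]; have cg := ispath_cont pg.
rewrite hinv_hclass // (hmul_hclass (prev_path pg) pg) /E.
move: pg => [_ [g0 g1]]; rewrite -g1; apply: hclass_eq; exact: prev_pconcat.
Qed.

End G.

Section F.
Context {X Y Z : topologicalType}.

Lemma comp_pconcat (f : X -> Y) (g k : R -> X) : f \o pconcat g k = pconcat (f \o g) (f \o k).
Proof. by apply: funext => s; rewrite /pconcat /=; case: ifP. Qed.

Lemma pc_push (f : X -> Y) a b A : continuous f -> pclasses a b A ->
  pclasses (f a) (f b) (hpush f A).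
Proof.
move=> cf [g [pg ->]]; exists (f \o g); split; first exact: push_path.
by rewrite hpush_hclass //; exact: ispath_cont pg.
Qed.

Lemma hpushM (f : X -> Y) a b c A B : continuous f -> pclasses a b A -> pclasses b c B ->
  hpush f (hmul A B) = hmul (hpush f A) (hpush f B).
Proof.
move=> cf [g [pg ->]] [k [pk ->]].
have cg := ispath_cont pg; have ck := ispath_cont pk.
have cgk := ispath_cont (pconcat_path pg pk).
rewrite (hmul_hclass pg pk) !hpush_hclass //.
rewrite (hmul_hclass (push_path cf pg) (push_path cf pk)).
by rewrite comp_pconcat.
Qed.

Lemma hpushV (f : X -> Y) a b A : continuous f -> pclasses a b A ->
  hpush f (hinv A) = hinv (hpush f A).
Proof.
move=> cf [g [pg ->]]; have cg := ispath_cont pg.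
rewrite hinv_hclass // !hpush_hclass //; last exact: prev_cont.
by rewrite hinv_hclass //; exact: push_cont.
Qed.

Lemma hpush_comp (h : Y -> Z) (f : X -> Y) a b A : continuous h -> continuous f ->
  pclasses a b A -> hpush h (hpush f A) = hpush (h \o f) A.
Proof.
move=> ch cf [g [pg ->]]; have cg := ispath_cont pg.
rewrite !hpush_hclass //; last exact: push_cont.
by move=> x; apply: continuous_comp; [exact: cf|exact: ch].
Qed.

Lemma hpushE (f : X -> Y) (a : X) : continuous f -> hpush f (E a) = E (f a).
Proof. by move=> cf; rewrite /E hpush_hclass //; exact: within_cst. Qed.

End F.


Section I.
Context {X : topologicalType} (u : X -> X) (H : X * R -> X).
Hypothesis cH : {within [set: X] `*` uI, continuous H}.
Hypothesis Hu : forall x, H (x, 0) = u x /\ H (x, 1) = x.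

Lemma track_path (x : X) : is_path (fun t => H (x, t)) (u x) x.
Proof.
split; last by case: (Hu x).
apply: (@within_comp _ _ _ uI ([set: X] `*` uI) (fun t => (x, t)) H) => //.
  by apply: within_pair; [exact: within_cst|exact: within_id].
Qed.

End I.

Lemma iso_conj {X : topologicalType} (u : X -> X) (H : X * R -> X)
  (cH : {within [set: X] `*` uI, continuous H})
  (Hu : forall x, H (x, 0) = u x /\ H (x, 1) = x)
  (cu : continuous u) (g : R -> X) a b : is_path g a b ->
  hpush u (hclass g) =
  hmul (hmul (hclass (fun t => H (a, t))) (hclass g)) (hinv (hclass (fun t => H (b, t)))).
Proof.
move=> pg; have cg := ispath_cont pg; have [_ [g0 g1]] := pg.
have pa := track_path cH Hu a; have pb := track_path cH Hu b.
rewrite hpush_hclass // hinv_hclass; last exact: ispath_cont pb.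
rewrite (hmul_hclass pa pg) (hmul_hclass (pconcat_path pa pg) (prev_path pb)).
apply: hclass_eq.
pose F := fun z : R * R => H (g z.1, z.2).
pose lft := fun s : R => ((0 : R), s).
pose top := fun s : R => (s, (1 : R)).
pose rgt := fun s : R => ((1 : R), 1 - s).
have eF1 : u \o g = F \o (fun s => (s, 0)).
  by apply: funext => s; rewrite /F /=; case: (Hu (g s)).
have eF2 : pconcat (pconcat (fun t => H (a, t)) g) (prev (fun t => H (b, t))) =
    F \o pconcat (pconcat lft top) rgt.
  rewrite !comp_pconcat; congr pconcat; [congr pconcat|].
  - by apply: funext => s; rewrite /F /= g0.
  - by apply: funext => s; rewrite /F /=; case: (Hu (g s)).
  - by apply: funext => s; rewrite /F /prev /= g1.
rewrite eF1 eF2; apply: conv_htpy.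
- apply: (@within_comp _ _ _ (uI `*` uI) ([set: X] `*` uI) (fun z => (g z.1, z.2)) H) => //.
    apply: within_pair; last exact: within_snd.
    apply: (@within_comp _ _ _ (uI `*` uI) uI fst g) => //; first exact: within_fst.
    by move=> z [].
  by move=> z [].
- by apply: within_pair; [exact: within_id|exact: within_cst].
- apply: pconcat_cont.
  + apply: pconcat_cont.
    * by apply: within_pair; [exact: within_cst|exact: within_id].
    * by apply: within_pair; [exact: within_id|exact: within_cst].
    * by [].
  + apply: within_pair; [exact: within_cst|].
    by apply: within_sub; [exact: within_cst|exact: within_id].
  + rewrite /pconcat /top /rgt.
    have -> : ((1 : R) <= 2^-1) = false by apply/negbTE; rewrite -ltNge; lra.
    by congr pair; lra.
- by move=> s us; split => //; exact: uI0.
- move=> s /uIP/andP[? ?]; rewrite /pconcat /lft /top /rgt.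
  by split_ifs; split; apply/uIP/andP; split => /=; clean; lra.
- rewrite /pconcat /lft /top /rgt; split_ifs; try (exfalso; rlra); try (congr pair; rlra).
- rewrite /pconcat /lft /top /rgt; split_ifs; try (exfalso; rlra); try (congr pair; rlra).
Qed.


Section A.
Context {X : topologicalType}.
Implicit Types (a b c d : X) (A B C D : set (R -> X)).

Lemma hinvK a b A : pclasses a b A -> hinv (hinv A) = A.
Proof.
move=> [g [pg ->]]; have cg := ispath_cont pg.
rewrite !hinv_hclass //; last exact: prev_cont.
by congr hclass; apply: funext => s; rewrite /prev; congr g; rlra.
Qed.

Lemma hinvE a : hinv (E a) = E a.
Proof. by rewrite /E hinv_hclass //; exact: within_cst. Qed.

Lemma mulKl a b c A B : pclasses a b A -> pclasses b c B -> hmul (hinv A) (hmul A B) = B.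
Proof.
move=> pA pB; rewrite -(hmulA (pc_inv pA) pA pB) (hmulVl pA); exact: hmul1l pB.
Qed.

Lemma mulKVl a b c A B : pclasses a b A -> pclasses a c B -> hmul A (hmul (hinv A) B) = B.
Proof.
move=> pA pB; rewrite -(hmulA pA (pc_inv pA) pB) (hmulV pA); exact: hmul1l pB.
Qed.

Lemma mulKr a b c A B : pclasses a b A -> pclasses c b B -> hmul (hmul B (hinv A)) A = B.
Proof.
move=> pA pB; rewrite (hmulA pB (pc_inv pA) pA) (hmulVl pA); exact: hmul1r pB.
Qed.

Lemma mulKVr a b c A B : pclasses a b A -> pclasses c a B -> hmul (hmul B A) (hinv A) = B.
Proof.
move=> pA pB; rewrite (hmulA pB pA (pc_inv pA)) (hmulV pA); exact: hmul1r pB.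
Qed.

Lemma inv_uniq a b A C : pclasses a b A -> pclasses b a C -> hmul A C = E a -> C = hinv A.
Proof.
move=> pA pC e.
by rewrite -(mulKl pA pC) e (hmul1r (pc_inv pA)).
Qed.

Lemma hinvM a b c A B : pclasses a b A -> pclasses b c B ->
  hinv (hmul A B) = hmul (hinv B) (hinv A).
Proof.
move=> pA pB; symmetry; apply: inv_uniq.
- exact: pc_mul pA pB.
- exact: pc_mul (pc_inv pB) (pc_inv pA).
rewrite (hmulA pA pB (pc_mul (pc_inv pB) (pc_inv pA))).
by rewrite (mulKVl pB (pc_inv pA)) (hmulV pA).
Qed.

Definition conj C A := hmul (hmul C A) (hinv C).

Lemma pc_conj a b C A : pclasses a b C -> pclasses b b A -> pclasses a a (conj C A).
Proof. move=> pC pA; exact: pc_mul (pc_mul pC pA) (pc_inv pC). Qed.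

Lemma conjM a b C A B : pclasses a b C -> pclasses b b A -> pclasses b b B ->
  conj C (hmul A B) = hmul (conj C A) (conj C B).
Proof.
move=> pC pA pB; rewrite /conj.
rewrite (hmulA (pc_mul pC pA) (pc_inv pC) (pc_mul (pc_mul pC pB) (pc_inv pC))).
rewrite -(hmulA (pc_inv pC) (pc_mul pC pB) (pc_inv pC)).
rewrite -(hmulA (pc_inv pC) pC pB) (hmulVl pC) (hmul1l pB).
rewrite -(hmulA (pc_mul pC pA) pB (pc_inv pC)).
by rewrite (hmulA pC pA pB).
Qed.

Lemma conj_comp a b c C C' A : pclasses a b C -> pclasses b c C' -> pclasses c c A ->
  conj C (conj C' A) = conj (hmul C C') A.
Proof.
move=> pC pC' pA; rewrite /conj (hinvM pC pC').
have pCA := pc_mul (pc_mul pC' pA) (pc_inv pC').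
have pI := pc_mul (pc_inv pC') (pc_inv pC).
rewrite (hmulA pC pCA (pc_inv pC)).
rewrite (hmulA (pc_mul pC' pA) (pc_inv pC') (pc_inv pC)).
rewrite (hmulA pC' pA pI).
rewrite (hmulA (pc_mul pC pC') pA pI).
by rewrite (hmulA pC pC' (pc_mul pA pI)).
Qed.

Lemma conjE a A : pclasses a a A -> conj (E a) A = A.
Proof. by move=> pA; rewrite /conj hinvE (hmul1l pA) (hmul1r pA). Qed.

Lemma conjK a b C A : pclasses a b C -> pclasses a a A -> conj C (conj (hinv C) A) = A.
Proof.
move=> pC pA; rewrite (conj_comp pC (pc_inv pC) pA) (hmulV pC); exact: conjE.
Qed.

End A.

Lemma hpush_conj {X Y : topologicalType} (f : X -> Y) a b C A : continuous f ->
  pclasses a b C -> pclasses b b A -> hpush f (conj C A) = conj (hpush f C) (hpush f A).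
Proof.
move=> cf pC pA; rewrite /conj.
rewrite (hpushM cf (pc_mul pC pA) (pc_inv pC)) (hpushM cf pC pA).
by rewrite (hpushV cf pC).
Qed.


Lemma right_pr (Y X : topologicalType) (f : Y -> X) (dag : Y) :
  right_principal f dag (f dag).
Proof.
split; first by exists (E (f dag)); exact: pc_E.
move=> b b' pb pb'; exists (hmul (hinv b) b'); split.
  split; first exact: pc_mul (pc_inv pb) pb'.
  exact: mulKVl pb pb'.
move=> m [pm <-]; exact: (mulKl pb pm).
Qed.

Lemma split_epi (Y X : topologicalType) (f : Y -> X) (dag : Y) :
  path_connected Y -> generic_map f -> split_epi_pi1 f dag.
Proof.
move=> pcY [cf [g [cg [H [cH [Hu _]]]]]].
have Hu' : forall x, H (x, 0%R) = (f \o g) x /\ H (x, 1%R) = x by exact: Hu.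
have cfg : continuous (f \o g).
  by move=> x; apply: continuous_comp; [exact: cg|exact: cf].
have [del pdel] := pcY dag (g (f dag)).
have pD : pclasses dag (g (f dag)) (hclass del) by exists del.
have pAl : pclasses (f (g (f dag))) (f dag) (hclass (fun t => H (f dag, t))).
  by exists (fun t => H (f dag, t)); split => //; exact: (track_path cH Hu').
have pb := pc_mul (pc_push cf pD) pAl.
have isoc : forall Q, pclasses (f dag) (f dag) Q ->
    hpush (f \o g) Q = conj (hclass (fun t => H (f dag, t))) Q.
  move=> Q [q [pq ->]]; exact: (iso_conj cH Hu' cfg pq).
exists (fun A => conj (hclass del) (hpush g (conj (hinv (hmul (hpush f (hclass del))
   (hclass (fun t => H (f dag, t))))) A))).
split.
  move=> A pA; apply: (pc_conj pD); apply: (pc_push cg); exact: pc_conj (pc_inv pb) pA.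
split.
  move=> A B pA pB.
  have pA' := pc_conj (pc_inv pb) pA; have pB' := pc_conj (pc_inv pb) pB.
  rewrite (conjM (pc_inv pb) pA pB) (hpushM cg pA' pB').
  exact: conjM pD (pc_push cg pA') (pc_push cg pB').
move=> A pA.
have pA' := pc_conj (pc_inv pb) pA.
rewrite (hpush_conj cf pD (pc_push cg pA')) (hpush_comp cf cg pA') (isoc _ pA').
rewrite (conj_comp (pc_push cf pD) pAl pA').
exact: conjK pb pA.
Qed.

Section LI.
Context (Y X : topologicalType) (f : Y -> X) (dag : Y).
Hypothesis cf : continuous f.
Hypothesis sp : split_epi_pi1 f dag.

Local Notation x0 := (f dag).
Local Notation B := (pclasses x0 x0).
Definition invp (x : set (R -> X) * set (R -> X)) := hmul (hinv x.1) x.2.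

Lemma tr_refl x : tens_rel f dag x0 x x.
Proof. by move=> Ee r _ _ _; exact: r. Qed.

Lemma tr_sym x y : tens_rel f dag x0 x y -> tens_rel f dag x0 y x.
Proof. by move=> h Ee r s t g; apply: (s); exact: (h Ee r s t g). Qed.

Lemma tr_trans x y z : tens_rel f dag x0 x y -> tens_rel f dag x0 y z -> tens_rel f dag x0 x z.
Proof. by move=> h1 h2 Ee r s t g; apply: (t _ y); [exact: (h1 Ee r s t g)|exact: (h2 Ee r s t g)]. Qed.

Lemma tr_gen x y : tens_gen f dag x0 x y -> tens_rel f dag x0 x y.
Proof. by move=> h Ee r s t g; exact: g. Qed.

Lemma tr_inv x y : tens_rel f dag x0 x y -> B x.1 -> B x.2 -> B y.1 /\ B y.2 /\ invp y = invp x.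
Proof.
move=> h b1 b2.
pose Ee := fun z w : set (R -> X) * set (R -> X) =>
  z = w \/ (B z.1 /\ B z.2 /\ B w.1 /\ B w.2 /\ invp z = invp w).
have : Ee x y.
  apply: h.
  - by move=> z; left.
  - move=> z w [->|[? [? [? [? e]]]]]; [by left|by right].
  - move=> z w u [->|[z1 [z2 [w1 [w2 e1]]]]] [<-|[? [? [u1 [u2 e2]]]]].
    + by left.
    + by right.
    + by right.
    + by right; rewrite e1 e2.
  - move=> z w [b [c [hh [pb [pc [ph [-> ->]]]]]]]; right => /=.
    have pP := pc_push cf ph.
    rewrite /Bl (hpushV cf ph).
    have pb' := pc_mul (pc_inv pP) pb.
    split; first exact: pb'.
    split; first exact: pc.
    split; first exact: pb.
    split; first exact: pc_mul pP pc.
    rewrite /invp /= (hinvM (pc_inv pP) pb) (hinvK pP).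
    exact: hmulA (pc_inv pb) pP pc.
case=> [<-|[_ [_ [? [? e]]]]]; [by [] | by []].
Qed.

Definition phi (C : set (set (R -> X) * set (R -> X))) : set (R -> X) :=
  [set h | exists x, C x /\ invp x h].

Lemma phiC x : B x.1 -> B x.2 -> phi [set y | tens_rel f dag x0 x y] = invp x.
Proof.
move=> b1 b2; apply/seteqP; split => h /=.
  move=> [y [xy hy]]; have [_ [_ e]] := tr_inv xy b1 b2; by rewrite -e.
by move=> hx; exists x; split => //; exact: tr_refl.
Qed.

Lemma inv_act z1 z2 g g' : B z1 -> B z2 -> B g -> B g' ->
  invp (hmul z1 (hinv g), hmul z2 g') = hmul (hmul g (invp (z1, z2))) g'.
Proof.
move=> p1 p2 pg pg'; rewrite /invp /= (hinvM p1 (pc_inv pg)) (hinvK pg).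
rewrite (hmulA pg (pc_inv p1) (pc_mul p2 pg')).
rewrite (hmulA pg (pc_mul (pc_inv p1) p2) pg').
by rewrite (hmulA (pc_inv p1) p2 pg').
Qed.

Lemma left_inv : left_invertible f dag x0.
Proof.
have [s [ps [_ fs]]] := sp.
exists phi; split.
  move=> C [x [p1 [p2 ->]]]; rewrite phiC //; exact: pc_mul (pc_inv p1) p2.
split.
  move=> C D [x [p1 [p2 ->]]] [x' [p1' [p2' ->]]]; rewrite !phiC // => e.
  have xx : tens_rel f dag x0 x x'.
    apply: tr_gen; move: x x' p1 p2 p1' p2' e => [x1 x2] [x1' x2'] /= p1 p2 p1' p2' e.
    have pP := pc_mul p1' (pc_inv p1).
    exists x1', x2, (s (hmul x1' (hinv x1))); split => //; split => //; split; first exact: ps.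
    rewrite /Bl (hpushV cf (ps _ pP)) (fs _ pP) (hinvM p1' (pc_inv p1)) (hinvK p1).
    rewrite (mulKr p1' p1); split => //.
    rewrite (hmulA p1' (pc_inv p1) p2); rewrite /invp /= in e; rewrite e.
    by rewrite (mulKVl p1' p2').
  apply/seteqP; split => y /= h.
    exact: tr_trans (tr_sym xx) h.
  exact: tr_trans xx h.
split.
  move=> A pA; exists [set y | tens_rel f dag x0 (E x0, A) y]; split.
    by exists (E x0, A); split; [exact: pc_E|split].
  by rewrite phiC //=; [rewrite /invp /= hinvE (hmul1l pA) | exact: pc_E].
move=> C g g' [x [p1 [p2 ->]]] pg pg'; rewrite phiC //.
apply/seteqP; split => h /=.
  move=> [y [[z [xz zy]] hy]].
  have [q1 [q2 ez]] := tr_inv xz p1 p2.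
  have r1 := pc_mul q1 (pc_inv pg); have r2 := pc_mul q2 pg'.
  have [_ [_ ey]] := tr_inv zy r1 r2.
  move: hy; rewrite ey; move: z q1 q2 ez {xz zy r1 r2 ey} => [z1 z2] /= q1 q2 ez.
  by rewrite (inv_act q1 q2 pg pg') ez.
move=> hh; exists (hmul x.1 (hinv g), hmul x.2 g'); split.
  exists x; split; first exact: tr_refl.
  exact: tr_refl.
move: x p1 p2 hh => [x1 x2] /= p1 p2 hh.
by rewrite (inv_act p1 p2 pg pg').
Qed.

End LI.

Theorem mainTheorem20 (Y X : topologicalType) (f : Y -> X) (dag : Y) :
  path_connected Y -> path_connected X -> generic_map f ->
  split_epi_pi1 f dag /\
  right_principal f dag (f dag) /\ left_invertible f dag (f dag).
Proof.
move=> pcY _ gf.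
have sp := @split_epi Y X f dag pcY gf.
split => //; split; first exact: right_pr.
by apply: left_inv => //; case: gf.
Qed.
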